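(* Let $\Sigma=\{\sigma_0,\sigma_1,\sigma_2\}$ and consider two users with confusion graphs $G_1=(\Sigma,\{\sigma_0\sigma_1,\sigma_0\sigma_2\})$ and an arbitrary graph $G_2$ on $\Sigma$. Then the rate vectors $(\alpha\log_2 c(G_1),(1-\alpha)\log_2 c(G_2))$, $\alpha\in[0,1]$, where $\log_2 c(G_1)=1$, are feasible, and every feasible rate vector $(R_1,R_2)$ satisfies $R_1\leq\alpha$ and $R_2\leq(1-\alpha)\log_2 c(G_2)$ for some $\alpha\in[0,1]$; i.e. the optimal rate vectors are exactly those given by time sharing between the single-user schemes.
   Context: Setting: a sender broadcasts a word of length $n$ over a finite alphabet $\Sigma$ to $r$ users; user $i$ has a confusion graph $G_i$ on vertex set $\Sigma$, where $ab$ is an edge iff user $i$ cannot distinguish letters $a$ and $b$. Two words $x,y\in\Sigma^n$ are distinguishable by user $i$ if there is a coordinate $t$ with $x_t\neq y_t$ and $x_ty_t$ not an edge of $G_i$. A vector $(m_1,\ldots,m_r)$ of positive integers is feasible for length $n$ if there is a map $E:[m_1]\times\cdots\times[m_r]\to\Sigma^n$ such that for every $i$ and all tuples $a,a'$ with $a_i\neq a'_i$, $E(a)$ and $E(a')$ are distinguishable by user $i$. A rate vector is feasible if there is a sequence of feasible vectors for lengths $n\to\infty$ with $R_i=\lim_{n\to\infty}\frac{\log_2 m_i^{(n)}}{n}$. The Shannon capacity is $c(G)=\lim_{n\to\infty}\alpha(G^n)^{1/n}$ with $G^n$ the strong power. A rate vector is optimal if it is feasible and no user can increase his rate while the other keeps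 the same rate. *)

(* Defs.v *)
From HB Require Import structures.
From mathcomp Require Import all_boot all_order all_algebra.
From mathcomp Require Import all_classical all_reals all_analysis.
Set Implicit Arguments. Unset Strict Implicit. Unset Printing Implicit Defensive.
Import Order.TTheory GRing.Theory Num.Theory.
Import numFieldNormedType.Exports.
Local Open Scope classical_set_scope.
Local Open Scope ring_scope.

(* A (confusion) graph on the alphabet [Sigma] is a relation [G : rel Sigma];
   [G a b] means the user cannot distinguish letters [a] and [b]. *)
Definition simple_graph (Sigma : finType) (G : rel Sigma) : Prop :=
  symmetric G /\ irreflexive G.

Definition distinguishable (Sigma : finType) (G : rel Sigma) (n : nat)
  (x y : n.-tuple Sigma) : bool :=
  [exists t : 'I_n, (tnth x t != tnth y t) && ~~ G (tnth x t) (tnth y t)].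

(* Independent sets in the strong power G^n: pairwise distinct words of S
   are pairwise non-adjacent in G^n, i.e. distinguishable. *)
Definition strong_power_indep (Sigma : finType) (G : rel Sigma) (n : nat)
  (S : {set n.-tuple Sigma}) : bool :=
  [forall x in S, forall y in S, (x != y) ==> distinguishable G x y].

Definition alpha_pow (Sigma : finType) (G : rel Sigma) (n : nat) : nat :=
  \max_(S : {set n.-tuple Sigma} | strong_power_indep G S) #|S|.

Definition shannon_capacity (R : realType) (Sigma : finType) (G : rel Sigma) : R :=
  limn (fun n : nat => powR ((alpha_pow G n)%:R : R) (n%:R^-1)).

Definition log2 (R : realType) (x : R) : R := ln x / ln 2.

Definition feasible_vec (Sigma : finType) (G1 G2 : rel Sigma) (n m1 m2 : nat) : Prop :=
  (0 < m1)%N /\ (0 < m2)%N /\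
  exists E : 'I_m1 * 'I_m2 -> n.-tuple Sigma,
    forall a a' : 'I_m1 * 'I_m2,
      (a.1 != a'.1 -> distinguishable G1 (E a) (E a')) /\
      (a.2 != a'.2 -> distinguishable G2 (E a) (E a')).

Definition feasible_rate (R : realType) (Sigma : finType) (G1 G2 : rel Sigma)
  (R1 R2 : R) : Prop :=
  exists m1 m2 : nat -> nat,
    (forall n, feasible_vec G1 G2 n (m1 n) (m2 n)) /\
    (fun n : nat => log2 ((m1 n)%:R : R) / n%:R) @ \oo --> R1 /\
    (fun n : nat => log2 ((m2 n)%:R : R) / n%:R) @ \oo --> R2.

Definition G1_star : rel 'I_3 :=
  fun a b => ((nat_of_ord a == 0%N) && (nat_of_ord b != 0%N))
          || ((nat_of_ord b == 0%N) && (nat_of_ord a != 0%N)).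

(* Main.v *)
Require Import Defs.
From HB Require Import structures.
From mathcomp Require Import all_boot all_order all_algebra.
From mathcomp Require Import all_classical all_reals all_analysis.
From mathcomp Require Import zify ring lra.
Import Order.TTheory GRing.Theory Num.Theory.
Import numFieldNormedType.Exports.
Set Implicit Arguments. Unset Strict Implicit. Unset Printing Implicit Defensive.
Local Open Scope ring_scope.

Definition l0 : 'I_3 := @Ordinal 3 0 isT.
Definition l1 : 'I_3 := @Ordinal 3 1 isT.
Definition l2 : 'I_3 := @Ordinal 3 2 isT.

Lemma ord3P (x : 'I_3) : [\/ x = l0, x = l1 | x = l2].
Proof.
case: x => [[|[|[|m]]] Hx] //.
- by apply: Or31; apply: val_inj.
- by apply: Or32; apply: val_inj.
- by apply: Or33; apply: val_inj.
Qed.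

Lemma tuple_neq {T : eqType} {n} {u v : n.-tuple T} :
  u != v -> exists i : 'I_n, tnth u i != tnth v i.
Proof.
move=> Huv; apply/existsP; apply: contraR Huv => /existsPn H.
by apply/eqP/eq_from_tnth => i; move: (H i); rewrite negbK => /eqP.
Qed.

Lemma alpha_pow_eq (Sigma K : finType) (G : rel Sigma)
  (kap : Sigma -> K) (io : K -> Sigma)
  (Hkap : forall x y, kap x = kap y -> x = y \/ G x y)
  (Hio : forall i j, i != j -> (io i != io j) && ~~ G (io i) (io j)) n :
  alpha_pow G n = (#|K| ^ n)%N.
Proof.
apply/eqP; rewrite eqn_leq; apply/andP; split.
  apply/bigmax_leqP => S HS.
  have inj : {in S &, injective (fun w : n.-tuple Sigma => map_tuple kap w)}.
    move=> w w' Hw Hw' Heq; apply/eqP; apply/negPn/negP => Hne.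
    move/forall_inP: HS => /(_ w Hw) /forall_inP /(_ w' Hw') /implyP /(_ Hne).
    move=> /existsP [t /andP [Hd HG]].
    have : tnth (map_tuple kap w) t = tnth (map_tuple kap w') t by rewrite Heq.
    rewrite !tnth_map => /Hkap [E|E]; first by rewrite E eqxx in Hd.
    by rewrite E in HG.
  rewrite -(card_in_imset inj).
  apply: (leq_trans (max_card _)).
  by rewrite card_tuple.
have ioinj : injective io.
  move=> i j Hij; apply/eqP; apply/negPn/negP => /Hio.
  by rewrite Hij eqxx.
have minj : injective (fun t : n.-tuple K => map_tuple io t).
  move=> t t' H; apply/eq_from_tnth => i.
  have : tnth (map_tuple io t) i = tnth (map_tuple io t') i by rewrite H.
  by rewrite !tnth_map => /ioinj.
set S0 := [set map_tuple io t | t : n.-tuple K].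
have -> : (#|K| ^ n)%N = #|S0|.
  by rewrite card_imset // card_tuple.
apply: leq_bigmax_cond.
apply/forall_inP => x /imsetP [t _ ->]; apply/forall_inP => y /imsetP [t' _ ->].
apply/implyP => Hne.
have Htt : t != t' by apply: contraNneq Hne => ->.
have [i Hi] := tuple_neq Htt.
apply/existsP; exists i; rewrite !tnth_map.
exact: Hio.
Qed.

Lemma cap_eq (R : realType) (Sigma : finType) (G : rel Sigma) (k : nat) :
  (0 < k)%N -> (forall n, alpha_pow G n = (k ^ n)%N) ->
  shannon_capacity R G = k%:R.
Proof.
move=> k0 H; rewrite /shannon_capacity.
apply: cvg_lim => //.
apply: cvg_near_cst.
near=> n.
have n0 : (0 < n)%N by near: n; exists 1%N.
rewrite H natrX -powR_mulrn ?ler0n // -powRrM mulfV ?powRr1 ?ler0n //.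
by rewrite pnatr_eq0 -lt0n.
Unshelve. all: by end_near.
Qed.

Lemma pattern_count (D : finType) n (q : 'I_3) (W : D -> n.-tuple 'I_3) :
  (forall x y, x != y -> exists t, (tnth (W x) t == q) != (tnth (W y) t == q)) ->
  (#|D| <= 2 ^ n)%N.
Proof.
move=> H.
have inj : injective (fun x => map_tuple (fun l => l == q) (W x)).
  move=> x y Hxy; apply/eqP/negPn/negP => /H [t Ht].
  have : tnth (map_tuple (fun l => l == q) (W x)) t =
         tnth (map_tuple (fun l => l == q) (W y)) t by rewrite Hxy.
  by rewrite !tnth_map => E; rewrite E eqxx in Ht.
by have := leq_card _ inj; rewrite card_tuple card_bool.
Qed.

Lemma G1_sep q : q = l1 \/ q = l2 ->
  forall x y, x != y -> ~~ G1_star x y -> (x == q) != (y == q).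
Proof.
by move=> Hq x y; case: (ord3P x) => ->; case: (ord3P y) => ->;
  case: Hq => ->.
Qed.

Lemma G1_nz x y : x != y -> ~~ G1_star x y -> (x != l0) && (y != l0).
Proof. by case: (ord3P x) => ->; case: (ord3P y) => ->. Qed.

Lemma m1_bound (G2 : rel 'I_3) n m1 m2 :
  feasible_vec G1_star G2 n m1 m2 -> (m1 <= 2 ^ n)%N.
Proof.
move=> [m10 [m20 [E HE]]].
pose b0 : 'I_m2 := Ordinal m20.
have := @pattern_count 'I_m1 n l2 (fun a => E (a, b0)).
rewrite card_ord; apply => x y Hxy.
have [H1 _] := HE (x, b0) (y, b0).
move: (H1 Hxy) => /existsP [t /andP [Hd HG]].
by exists t; apply: G1_sep => //; right.
Qed.

Lemma FL_pattern (G2 : rel 'I_3) q n m1 m2 : q = l1 \/ q = l2 ->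
  (forall x y, x != y -> ~~ G2 x y -> (x == q) != (y == q)) ->
  feasible_vec G1_star G2 n m1 m2 -> (m1 * m2 <= 2 ^ n)%N.
Proof.
move=> Hq H2 [m10 [m20 [E HE]]].
have := @pattern_count ('I_m1 * 'I_m2)%type n q E.
rewrite card_prod !card_ord; apply => x y Hxy.
have [H1 H1'] := HE x y.
have [e1|e1] := eqVneq x.1 y.1.
  have e2 : x.2 != y.2.
    by apply: contraNneq Hxy => e2; case: x y e1 e2 {H1 H1'} => [? ?] [? ?] /= -> ->.
  move: (H1' e2) => /existsP [t /andP [Hd HG]].
  by exists t; apply: H2.
move: (H1 e1) => /existsP [t /andP [Hd HG]].
by exists t; apply: G1_sep.
Qed.

Lemma card_split (T : finType) n (F : {set n.+1.-tuple T}) :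
  #|F| = (\sum_(x : T) #|[set w : n.-tuple T | [tuple of x :: w] \in F]|)%N.
Proof.
have bij : bijective (fun p : T * n.-tuple T => [tuple of p.1 :: p.2]).
  exists (fun w => (thead w, [tuple of behead w])).
  - by move=> [x w] /=; rewrite theadE; congr pair; apply: val_inj.
  - by move=> w /=; rewrite -tuple_eta.
rewrite -sum1_card (reindex _ (onW_bij _ bij)) /=.
rewrite -(pair_big_dep xpredT (fun (x : T) (w : n.-tuple T) => [tuple of x :: w] \in F) (fun _ _ => 1%N)) /=.
apply: eq_bigr => x _.
by rewrite sum1dep_card cardsE.
Qed.

Lemma sum_I3 (f : 'I_3 -> nat) : (\sum_(x : 'I_3) f x = f l0 + f l1 + f l2)%N.
Proof.
rewrite !big_ord_recr big_ord0 /= add0n.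
congr (_ + _ + _)%N; congr f; exact: val_inj.
Qed.

Lemma sum_bool (f : bool -> nat) : (\sum_(x : bool) f x = f false + f true)%N.
Proof. by rewrite big_bool addnC. Qed.

Definition pt (b : bool) : 'I_3 := if b then l2 else l1.
Definition incube n (p : n.-tuple bool) (w : n.-tuple 'I_3) : bool :=
  all2 (fun b x => (x == l0) || (x == pt b)) p w.
Definition zeros n (w : n.-tuple 'I_3) : n.-tuple bool :=
  map_tuple (fun x => x == l0) w.

Lemma incubeP n (p : n.-tuple bool) (w : n.-tuple 'I_3) :
  incube p w -> forall t, (tnth w t == l0) || (tnth w t == pt (tnth p t)).
Proof.
rewrite /incube all2E => /andP [_ /(all_nthP (false, l0)) H] t.
have := H t; rewrite size_zip !size_tuple minnn ltn_ord => /(_ isT).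
by rewrite (nth_zip false l0) ?size_tuple //= -(tnth_nth false) -(tnth_nth l0).
Qed.

Lemma incube_cons n b x (p : n.-tuple bool) (w : n.-tuple 'I_3) :
  incube [tuple of b :: p] [tuple of x :: w] = ((x == l0) || (x == pt b)) && incube p w.
Proof. by []. Qed.

Lemma zeros_cons n x (w : n.-tuple 'I_3) :
  zeros [tuple of x :: w] = [tuple of (x == l0) :: zeros w].
Proof. by apply: val_inj. Qed.

Lemma cons_inj (T : Type) n (x y : T) (w w' : n.-tuple T) :
  [tuple of x :: w] = [tuple of y :: w'] -> x = y /\ w = w'.
Proof. by move/(congr1 val) => /= [-> /val_inj ->]. Qed.

Lemma H1 n (U : {set n.-tuple bool}) (F : {set n.-tuple 'I_3}) :
  (forall w p, w \in F -> incube p w -> p \in U) ->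
  {in F &, injective (@zeros n)} -> (#|F| <= #|U|)%N.
Proof.
elim: n U F => [|n IH] U F HU Hinj.
  case: (set_0Vmem F) => [-> | [w Hw]]; first by rewrite cards0.
  have Hu : [tuple] \in U by apply: (HU w) => //; rewrite (tuple0 w).
  apply: (leq_trans (max_card _)); rewrite card_tuple expn0.
  by apply/card_gt0P; exists [tuple].
set U1 := [set p : n.-tuple bool | [tuple of false :: p] \in U].
set U2 := [set p : n.-tuple bool | [tuple of true :: p] \in U].
set Fx := fun x => [set w : n.-tuple 'I_3 | [tuple of x :: w] \in F].
set Z1 := [set zeros w | w in Fx l1].
set Zs := [set w : n.-tuple 'I_3 | zeros w \in Z1].
have cardU : #|U| = (#|U1| + #|U2|)%N by rewrite card_split sum_bool.
have cardF : #|F| = (#|Fx l0| + #|Fx l1| + #|Fx l2|)%N by rewrite card_split sum_I3.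
have Hinj' : forall x w w', w \in Fx x -> w' \in Fx x -> zeros w = zeros w' -> w = w'.
  move=> x w w'; rewrite !inE => Hw Hw' Hz.
  have E : [tuple of x :: w] = [tuple of x :: w'].
    by apply: Hinj => //; rewrite !zeros_cons Hz.
  by have [] := cons_inj E.
have cross : forall w v, w \in Fx l2 -> v \in Fx l1 -> zeros w != zeros v.
  move=> w v; rewrite !inE => Hw Hv; apply/eqP => Hz.
  have E : [tuple of l2 :: w] = [tuple of l1 :: v].
    by apply: Hinj => //; rewrite !zeros_cons Hz.
  by have [/(congr1 val)] := cons_inj E.
have inZ1 : forall w, w \in Fx l1 -> w \in Zs.
  by move=> w Hw; rewrite inE; apply: imset_f.
pose fam1 := Fx l1 :|: (Fx l0 :\: Zs).
pose fam2 := Fx l2 :|: (Fx l0 :&: Zs).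
have h1 : (#|fam1| <= #|U1|)%N.
  apply: IH.
    move=> w p; rewrite !inE => /orP [Hw|/andP [_ Hw]] Hc.
      by apply: (HU _ _ Hw); rewrite incube_cons Hc.
    by apply: (HU _ _ Hw); rewrite incube_cons Hc.
  move=> w w' /setUP [Hw|/setDP [Hw Hz]] /setUP [Hw'|/setDP [Hw' Hz']] E.
  - exact: (Hinj' l1 w w' Hw Hw' E).
  - have := inZ1 w Hw; rewrite inE => Hz1.
    by move: Hz'; rewrite inE -E Hz1.
  - have := inZ1 w' Hw'; rewrite inE => Hz1.
    by move: Hz; rewrite inE E Hz1.
  - exact: (Hinj' l0 w w' Hw Hw' E).
have h2 : (#|fam2| <= #|U2|)%N.
  apply: IH.
    move=> w p; rewrite !inE => /orP [Hw|/andP [Hw _]] Hc.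
      by apply: (HU _ _ Hw); rewrite incube_cons Hc.
    by apply: (HU _ _ Hw); rewrite incube_cons Hc.
  move=> w w' /setUP [Hw|/setIP [Hw Hz]] /setUP [Hw'|/setIP [Hw' Hz']] E.
  - exact: (Hinj' l2 w w' Hw Hw' E).
  - move: Hz'; rewrite inE -E => /imsetP [v Hv Ev].
    by move: (cross _ _ Hw Hv); rewrite Ev eqxx.
  - move: Hz; rewrite inE E => /imsetP [v Hv Ev].
    by move: (cross _ _ Hw' Hv); rewrite Ev eqxx.
  - exact: (Hinj' l0 w w' Hw Hw' E).
have d1 : #|Fx l1 :&: (Fx l0 :\: Zs)| = 0%N.
  apply/eqP; rewrite cards_eq0; apply/negPn/negP => /set0Pn [w /setIP [Hw /setDP [_ Hz]]].
  by move: Hz; rewrite (inZ1 w Hw).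
have d2 : #|Fx l2 :&: (Fx l0 :&: Zs)| = 0%N.
  apply/eqP; rewrite cards_eq0; apply/negPn/negP => /set0Pn [w /setIP [Hw /setIP [_ Hz]]].
  move: Hz; rewrite inE => /imsetP [v Hv Ev].
  by move: (cross _ _ Hw Hv); rewrite Ev eqxx.
have e1 := cardsUI (Fx l1) (Fx l0 :\: Zs).
have e2 := cardsUI (Fx l2) (Fx l0 :&: Zs).
have e3 := cardsID Zs (Fx l0).
rewrite d1 in e1; rewrite d2 in e2.
rewrite cardF cardU.
rewrite -/fam1 -/fam2 in e1 e2.
move: h1 h2 e1 e2 e3; lia.
Qed.

Section Real.
Variable R : realType.

Lemma ln2_gt0 : 0 < ln (2 : R).
Proof. by apply: ln_gt0; rewrite ltr1n. Qed.

Lemma c_ge1 : 1 <= log2 (3%:R : R).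
Proof.
rewrite /log2 ler_pdivlMr ?ln2_gt0 // mul1r.
by rewrite ler_ln ?posrE // ler_nat.
Qed.

Lemma powR2c : (2 : R) `^ log2 (3%:R : R) = 3%:R.
Proof.
rewrite /log2 -{1}(lnK (_ : 0 < 2)) ?posrE //.
rewrite -expRM mulrC -mulrA mulVf ?mulr1 ?lnK ?posrE //.
by apply: lt0r_neq0; exact: ln2_gt0.
Qed.

Lemma powR_conv (p x y t : R) : 1 <= p -> 0 <= x -> 0 <= y -> 0 <= t -> t <= 1 ->
  (t * x + (1 - t) * y) `^ p <= t * x `^ p + (1 - t) * y `^ p.
Proof.
move=> p1 x0 y0 t0 t1.
have := @convex_powR R p p1 (Itv01 t0 t1) x y.
rewrite !convRE /=.
apply.
  by rewrite inE /= in_itv /= x0.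
by rewrite inE /= in_itv /= y0.
Qed.

Lemma key3 (x y : R) : 0 <= y -> y <= x ->
  x `^ log2 (3%:R : R) + y `^ log2 (3%:R : R) + y `^ log2 (3%:R : R)
  <= (x + y) `^ log2 (3%:R : R).
Proof.
set c := log2 _ => y0 yx.
have c1 : 1 <= c by exact: c_ge1.
have cn0 : c != 0 by apply: lt0r_neq0; apply: lt_le_trans c1.
set s := x + y.
have [s0|s0] := eqVneq s 0.
  have x0 : x = 0 by rewrite /s in s0; lra.
  have y00 : y = 0 by rewrite /s in s0; lra.
  by rewrite /s x0 y00 addr0 !powR0 // !addr0.
have sp : 0 < s by rewrite lt0r s0 /s; lra.
set lam := 2 * y / s.
have l0 : 0 <= lam by rewrite /lam divr_ge0 // ?mulr_ge0 // ltW.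
have l1 : lam <= 1 by rewrite /lam ler_pdivrMr // mul1r /s; lra.
have ex : x = lam * (s / 2) + (1 - lam) * s by rewrite /lam /s; field; rewrite -/s.
have ey : y = lam * (s / 2) + (1 - lam) * 0 by rewrite /lam /s; field; rewrite -/s.
have h2 : 0 <= s / 2 by rewrite divr_ge0 // ltW.
have hx := powR_conv c1 h2 (ltW sp) l0 l1.
have hy := powR_conv c1 h2 (lexx 0) l0 l1.
rewrite -ex in hx; rewrite -ey in hy.
rewrite powR0 // mulr0 addr0 in hy.
have hs : (s / 2) `^ c = s `^ c / 3%:R.
  rewrite powRM ?ltW ?invr_ge0 //.
  have -> : (2^-1 : R) `^ c = (3%:R)^-1.
    have E : (2^-1 : R) `^ c * 3%:R = 1.
      by rewrite -powR2c -powRM ?invr_ge0 ?ler0n // mulVf ?pnatr_eq0 // powR1.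
    have n3 : (3%:R : R) != 0 by rewrite pnatr_eq0.
    by rewrite -[LHS](mulfK n3) E mul1r.
  done.
rewrite hs in hx hy.
have : x `^ c + y `^ c + y `^ c <= lam * (s `^ c / 3%:R) + (1 - lam) * s `^ c
   + lam * (s `^ c / 3%:R) + lam * (s `^ c / 3%:R) by lra.
have E : lam * (s `^ c / 3%:R) + (1 - lam) * s `^ c
   + lam * (s `^ c / 3%:R) + lam * (s `^ c / 3%:R) = s `^ c by field.
by rewrite E.
Qed.
Definition Wc n (U : {set n.-tuple bool}) : {set n.-tuple 'I_3} :=
  [set w | [forall p, incube p w ==> (p \in U)]].

Lemma H2 n (U : {set n.-tuple bool}) :
  (#|Wc U|%:R : R) <= (#|U|%:R) `^ log2 (3%:R : R).
Proof.
set c := log2 _.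
have c1 : 1 <= c by exact: c_ge1.
have c0 : 0 <= c by apply: le_trans c1.
elim: n U => [|n IH] U.
  case: (set_0Vmem U) => [U0 | [p Hp]].
    have -> : #|Wc U| = 0%N.
      apply/eqP; rewrite cards_eq0; apply/negPn/negP => /set0Pn [w].
      rewrite inE => /forallP /(_ [tuple]) /implyP.
      by rewrite (tuple0 w) U0 inE => /(_ isT).
    by rewrite powR_ge0.
  have cU : #|U| = 1%N.
    apply/eqP; rewrite eqn_leq; apply/andP; split.
      by apply: (leq_trans (max_card _)); rewrite card_tuple.
    by apply/card_gt0P; exists p.
  rewrite cU powR1 -[X in _ <= X]mulr1n ler_nat.
  by apply: (leq_trans (max_card _)); rewrite card_tuple.
set U1 := [set p : n.-tuple bool | [tuple of false :: p] \in U].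
set U2 := [set p : n.-tuple bool | [tuple of true :: p] \in U].
set Wx := fun x => [set w : n.-tuple 'I_3 | [tuple of x :: w] \in Wc U].
have cardU : #|U| = (#|U1| + #|U2|)%N by rewrite card_split sum_bool.
have cardW : #|Wc U| = (#|Wx l0| + #|Wx l1| + #|Wx l2|)%N by rewrite card_split sum_I3.
have s0 : (#|Wx l0| <= #|Wc (U1 :&: U2)|)%N.
  apply: subset_leq_card; apply/fintype.subsetP => w; rewrite !inE => /forallP H.
  apply/forallP => p; apply/implyP => Hc; rewrite !inE.
  have := H [tuple of false :: p]; rewrite incube_cons Hc /= => ->.
  by have := H [tuple of true :: p]; rewrite incube_cons Hc /= => ->.
have s1 : (#|Wx l1| <= #|Wc U1|)%N.
  apply: subset_leq_card; apply/fintype.subsetP => w; rewrite !inE => /forallP H.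
  apply/forallP => p; apply/implyP => Hc; rewrite !inE.
  by have := H [tuple of false :: p]; rewrite incube_cons Hc /= => ->.
have s2 : (#|Wx l2| <= #|Wc U2|)%N.
  apply: subset_leq_card; apply/fintype.subsetP => w; rewrite !inE => /forallP H.
  apply/forallP => p; apply/implyP => Hc; rewrite !inE.
  by have := H [tuple of true :: p]; rewrite incube_cons Hc /= => ->.
have hW : (#|Wc U|%:R : R) <= #|Wc (U1 :&: U2)|%:R + #|Wc U1|%:R + #|Wc U2|%:R.
  rewrite cardW -!natrD ler_nat; lia.
apply: (le_trans hW).
have pI := IH (U1 :&: U2); have p1 := IH U1; have p2 := IH U2.
have mono : forall a b : nat, (a <= b)%N -> (a%:R : R) `^ c <= (b%:R) `^ c.
  by move=> a b ab; apply: ge0_ler_powR => //; rewrite ?nnegrE ?ler0n ?ler_nat.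
rewrite cardU natrD.
have [le12|le21] := leqP #|U1| #|U2|.
  have hI : (#|U1 :&: U2| <= #|U1|)%N by apply: subset_leq_card; apply: subsetIl.
  have K0 : (#|U2|%:R : R) `^ c + #|U1|%:R `^ c + #|U1|%:R `^ c <=
    (#|U2|%:R + #|U1|%:R) `^ c by apply: key3; rewrite ?ler0n ?ler_nat.
  have K : (#|U1|%:R : R) `^ c + #|U1|%:R `^ c + #|U2|%:R `^ c <=
    (#|U1|%:R + #|U2|%:R) `^ c.
    by move: K0; rewrite -addrA addrC (addrC (#|U2|%:R)).
  apply: le_trans K; apply: lerD; last exact: p2.
  apply: lerD; last exact: p1.
  exact: le_trans pI (mono _ _ hI).
have hI : (#|U1 :&: U2| <= #|U2|)%N by apply: subset_leq_card; apply: subsetIr.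
have K : (#|U1|%:R : R) `^ c + #|U2|%:R `^ c + #|U2|%:R `^ c <=
    (#|U1|%:R + #|U2|%:R) `^ c by apply: key3; rewrite ?ler0n // ler_nat; apply: ltnW.
rewrite (addrC (#|U1|%:R `^ c)) in K.
apply: le_trans K; apply: lerD; last exact: p2.
apply: lerD; last exact: p1.
exact: le_trans pI (mono _ _ hI).
Qed.
End Real.

Section Conv.
Local Open Scope classical_set_scope.
Variable R : realType.

Lemma ln2_gt0' : 0 < ln (2 : R).
Proof. by apply: ln_gt0; rewrite ltr1n. Qed.

Lemma log2_ge0 (m : nat) : (0 < m)%N -> 0 <= log2 (m%:R : R).
Proof.
move=> m0; rewrite /log2; apply: divr_ge0; last exact: ltW ln2_gt0'.
by apply: ln_ge0; rewrite ler1n.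
Qed.

Lemma log2_le (m n : nat) : (0 < m)%N -> (m <= 2 ^ n)%N -> log2 (m%:R : R) <= n%:R.
Proof.
move=> m0 mn; rewrite /log2 ler_pdivrMr ?ln2_gt0' //.
have -> : n%:R * ln (2 : R) = ln ((2 : R) ^+ n) by rewrite lnXn // mulr_natl.
rewrite ler_ln ?posrE ?ltr0n ?exprn_gt0 // -natrX ler_nat //.
Qed.

Lemma converse_gen (G2 : rel 'I_3) (c2 : R) :
  0 <= c2 ->
  (forall n m1 m2, feasible_vec G1_star G2 n m1 m2 ->
     c2 * log2 (m1%:R : R) + log2 (m2%:R : R) <= n%:R * c2) ->
  forall R1 R2, feasible_rate G1_star G2 R1 R2 ->
  exists2 a : R, 0 <= a <= 1 & R1 <= a /\ R2 <= (1 - a) * c2.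
Proof.
move=> c20 FL R1 R2 [m1 [m2 [Hf [C1 C2]]]].
have pos1 : forall n, (0 < m1 n)%N by move=> n; case: (Hf n).
have pos2 : forall n, (0 < m2 n)%N by move=> n; case: (Hf n) => _ [].
have x0 : 0 <= R1.
  apply: (ler_cvg_to (cvg_cst 0) C1); near=> n.
  by rewrite divr_ge0 ?log2_ge0.
have y0 : 0 <= R2.
  apply: (ler_cvg_to (cvg_cst 0) C2); near=> n.
  by rewrite divr_ge0 ?log2_ge0.
have x1 : R1 <= 1.
  apply: (cvgr_to_le C1); near=> n.
  have n0 : (0 < n)%N by near: n; exists 1%N.
  rewrite ler_pdivrMr ?ltr0n // mul1r.
  exact: log2_le (m1_bound (Hf n)).
have key : c2 * R1 + R2 <= c2.
  have C : (fun n : nat => c2 * (log2 ((m1 n)%:R : R) / n%:R) + log2 ((m2 n)%:R : R) / n%:R)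
     @ \oo --> c2 * R1 + R2.
    apply: cvgD => //; exact: cvgMl_tmp.
  apply: (cvgr_to_le C); near=> n.
  have n0 : (0 < n)%N by near: n; exists 1%N.
  rewrite mulrA -mulrDl ler_pdivrMr ?ltr0n // [X in _ <= X]mulrC.
  exact: FL (Hf n).
exists R1; first by rewrite x0 x1.
split => //.
rewrite mulrBl mul1r; lra.
Unshelve. all: by end_near.
Qed.

Definition io1 (b : bool) : 'I_3 := if b then l2 else l1.

Lemma io1_sep b b' : b != b' -> (io1 b != io1 b') && ~~ G1_star (io1 b) (io1 b').
Proof. by case: b; case: b'. Qed.

Lemma log2_pow (k n : nat) : (0 < k)%N ->
  log2 ((k ^ n)%:R : R) = n%:R * log2 (k%:R : R).
Proof.
move=> k0; by rewrite /log2 natrX lnXn ?ltr0n // mulr_natl mulrnAl.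
Qed.

Lemma trunc_cvg (a : R) : 0 <= a ->
  (fun n : nat => (Num.trunc (a * n%:R))%:R / n%:R) @ \oo --> a.
Proof.
move=> a0.
apply: (@squeeze_cvgr _ _ _ _ (fun n => a - 2 * harmonic n) (fun=> a)).
- near=> n.
  have n0 : (0 < n)%N by near: n; exists 1%N.
  have an0 : 0 <= a * n%:R by rewrite mulr_ge0.
  have [tl tu] := andP (truncn_itv an0).
  set t := Num.trunc _ in tl tu *.
  apply/andP; split; last by rewrite ler_pdivrMr ?ltr0n.
  rewrite ler_pdivlMr ?ltr0n //.
  set N := n%:R in tl tu *; set H := harmonic n.
  have HN : (N + 1) * H = 1.
    by rewrite /H /= /N -natr1 mulfV // -natr1 pnatr_eq0.
  have N1 : 1 <= N by rewrite /N ler1n.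
  have H0 : 0 <= H * (N - 1) by rewrite mulr_ge0 ?harmonic_ge0 // subr_ge0.
  rewrite -natr1 in tu.
  nra.
- rewrite -[X in _ --> X]subr0.
  apply: cvgB; first exact: cvg_cst.
  rewrite -[X in _ --> X](mulr0 2).
  apply: cvgMl_tmp; exact: cvg_harmonic.
- exact: cvg_cst.
Unshelve. all: by end_near.
Qed.

Lemma timeshare (G2 : rel 'I_3) (K : finType) (io : K -> 'I_3)
  (Hio : forall i j, i != j -> (io i != io j) && ~~ G2 (io i) (io j))
  (k0 : (0 < #|K|)%N) (a : R) : 0 <= a -> a <= 1 ->
  feasible_rate G1_star G2 a ((1 - a) * log2 (#|K|%:R : R)).
Proof.
move=> a0 a1.
pose n1 n := Num.trunc (a * n%:R).
have n1le : forall n, (n1 n <= n)%N.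
  move=> n; rewrite -(ler_nat R); apply: (@le_trans _ _ (a * n%:R)).
    by rewrite truncn_le mulr_ge0.
  by rewrite -[X in _ <= X]mul1r ler_wpM2r.
pose m1 n := #|{: (n1 n).-tuple bool}|.
pose m2 n := #|{: (n - n1 n).-tuple K}|.
have em1 : forall n, m1 n = (2 ^ n1 n)%N by move=> n; rewrite /m1 card_tuple card_bool.
have em2 : forall n, m2 n = (#|K| ^ (n - n1 n))%N by move=> n; rewrite /m2 card_tuple.
exists m1, m2; split; [|split].
- move=> n; split; first by rewrite em1 expn_gt0.
  split; first by rewrite em2 expn_gt0 k0.
  pose E := fun ij : 'I_(m1 n) * 'I_(m2 n) =>
    [tuple (if (t < n1 n)%N then nth l0 (map io1 (enum_val ij.1)) t
            else nth l0 (map io (enum_val ij.2)) (t - n1 n)) | t < n].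
  exists E => x y; split => Hxy.
    have Huv : enum_val x.1 != enum_val y.1 by apply: contra Hxy => /eqP /enum_val_inj ->.
    have [s Hs] := tuple_neq Huv.
    apply/existsP; exists (widen_ord (n1le n) s).
    rewrite !tnth_mktuple /= ltn_ord.
    rewrite !(nth_map false) ?size_tuple ?ltn_ord // -!tnth_nth.
    exact: io1_sep.
  have Huv : enum_val x.2 != enum_val y.2 by apply: contra Hxy => /eqP /enum_val_inj ->.
  have [s Hs] := tuple_neq Huv.
  have sn : (n1 n + s < n)%N.
    have := ltn_ord s; have := n1le n; lia.
  apply/existsP; exists (Ordinal sn).
  rewrite !tnth_mktuple /= ltnNge leq_addr /= addKn.
  rewrite !(nth_map (tnth (enum_val x.2) s)) ?size_tuple ?ltn_ord // -!tnth_nth.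
  exact: Hio.
- have -> : (fun n : nat => log2 ((m1 n)%:R : R) / n%:R) =
            (fun n : nat => (n1 n)%:R / n%:R).
    apply/funext => n; rewrite em1 log2_pow // /log2 divff ?mulr1 //.
    exact: lt0r_neq0 ln2_gt0'.
  exact: trunc_cvg.
- have -> : (fun n : nat => log2 ((m2 n)%:R : R) / n%:R) =
            (fun n : nat => (n%:R / n%:R - (n1 n)%:R / n%:R) * log2 (#|K|%:R : R)).
    apply/funext => n; rewrite em2 log2_pow // natrB ?n1le // -mulrBl.
    by rewrite mulrAC.
  apply: cvgMr_tmp; apply: cvgB; last exact: trunc_cvg.
  apply: cvg_near_cst; near=> n.
  have n0 : (0 < n)%N by near: n; exists 1%N.
  by rewrite divff // pnatr_eq0 -lt0n.
Unshelve. all: by end_near.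
Qed.

End Conv.

Definition Ua n m1 m2 (E : 'I_m1 * 'I_m2 -> n.-tuple 'I_3) (a : 'I_m1) :
  {set n.-tuple bool} := [set p | [exists b, incube p (E (a, b))]].

Lemma Ua_disj n m1 m2 (E : 'I_m1 * 'I_m2 -> n.-tuple 'I_3) :
  (forall x y, x.1 != y.1 -> distinguishable G1_star (E x) (E y)) ->
  (\sum_(a < m1) #|Ua E a| <= 2 ^ n)%N.
Proof.
move=> HE.
have Hp : forall p, (\sum_(a < m1) (p \in Ua E a : nat) <= 1)%N.
  move=> p.
  rewrite (eq_bigr (fun a => if p \in Ua E a then 1%N else 0%N)); last first.
    by move=> a _; case: (_ \in _).
  rewrite -big_mkcond /= sum1dep_card.
  apply/card_le1_eqP => a a'; rewrite !inE => /existsP [b Hb] /existsP [b' Hb'].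
  apply/eqP/negPn/negP => Hne; rewrite eq_sym in Hne.
  have := HE (a, b) (a', b') Hne => /existsP [t /andP [Hd HG]].
  have /andP [nx ny] := G1_nz Hd HG.
  have := incubeP Hb t; have := incubeP Hb' t.
  rewrite (negbTE nx) (negbTE ny) /= => /eqP e1 /eqP e2.
  by rewrite e1 e2 eqxx in Hd.
have E1 : (\sum_(a < m1) #|Ua E a| =
           \sum_(a < m1) \sum_(p : n.-tuple bool) (p \in Ua E a : nat))%N.
  apply: eq_bigr => a _; rewrite -sum1_card big_mkcond /=.
  by apply: eq_bigr => p _; case: (_ \in _).
rewrite E1 exchange_big /=.
apply: (@leq_trans (\sum_(p : n.-tuple bool) 1)%N).
  by apply: leq_sum => p _; exact: Hp.
by rewrite sum_nat_const card_tuple card_bool muln1.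
Qed.

Lemma feas_row (G2 : rel 'I_3) n m1 m2 (E : 'I_m1 * 'I_m2 -> n.-tuple 'I_3) a :
  (forall x y : 'I_m1 * 'I_m2, x.2 != y.2 -> distinguishable G2 (E x) (E y)) ->
  injective (fun b => E (a, b)).
Proof.
move=> HE b b' Heq; apply/eqP/negPn/negP => Hne.
have := HE (a, b) (a, b') Hne => /existsP [t /andP [Hd _]].
by rewrite /= Heq eqxx in Hd.
Qed.

Lemma FL_H1 (G2 : rel 'I_3) n m1 m2 :
  (forall x y, x != y -> ~~ G2 x y -> (x == l0) != (y == l0)) ->
  feasible_vec G1_star G2 n m1 m2 -> (m1 * m2 <= 2 ^ n)%N.
Proof.
move=> H2 [m10 [m20 [E HE]]].
have HE1 : forall x y, x.1 != y.1 -> distinguishable G1_star (E x) (E y).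
  by move=> x y; case: (HE x y).
have HE2 : forall x y, x.2 != y.2 -> distinguishable G2 (E x) (E y).
  by move=> x y; case: (HE x y).
have row : forall a, (m2 <= #|Ua E a|)%N.
  move=> a; have := @H1 n (Ua E a) [set E (a, b) | b : 'I_m2].
  rewrite card_imset ?card_ord; last exact: feas_row HE2.
  apply.
    move=> w p /imsetP [b _ ->] Hc; rewrite inE; apply/existsP; by exists b.
  move=> w w' /imsetP [b _ ->] /imsetP [b' _ ->] Hz.
  apply/eqP/negPn/negP => Hne.
  have Hbb : b != b' by apply: contraNneq Hne => ->.
  have := HE2 (a, b) (a, b') Hbb => /existsP [t /andP [Hd HG]].
  have := H2 _ _ Hd HG.
  have : tnth (zeros (E (a, b))) t = tnth (zeros (E (a, b'))) t by rewrite Hz.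
  by rewrite !tnth_map => ->; rewrite eqxx.
have S : (\sum_(a < m1) m2 <= \sum_(a < m1) #|Ua E a|)%N.
  by apply: leq_sum => a _; exact: row.
rewrite big_const_ord iter_addn_0 in S.
rewrite mulnC; exact: leq_trans S (Ua_disj HE1).
Qed.

Lemma m2_le1 (G2 : rel 'I_3) n m1 m2 :
  (forall x y, x != y -> G2 x y) ->
  feasible_vec G1_star G2 n m1 m2 -> (m2 <= 1)%N.
Proof.
move=> Hall [m10 [m20 [E HE]]].
rewrite leqNgt; apply/negP => m2gt.
pose a0 : 'I_m1 := Ordinal m10.
pose b0 : 'I_m2 := Ordinal m20.
pose b1 : 'I_m2 := Ordinal m2gt.
have [_ H] := HE (a0, b0) (a0, b1).
have := H isT => /existsP [t /andP [Hd HG]].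
by rewrite Hall in HG.
Qed.

Section Final.
Local Open Scope classical_set_scope.
Variable R : realType.

Lemma log2_2 : log2 (2%:R : R) = 1.
Proof. by rewrite /log2 divff //; apply: lt0r_neq0; exact: ln2_gt0'. Qed.

Lemma FL_bool (G2 : rel 'I_3) n m1 m2 :
  feasible_vec G1_star G2 n m1 m2 -> (m1 * m2 <= 2 ^ n)%N ->
  log2 (#|{: bool}|%:R : R) * log2 (m1%:R : R) + log2 (m2%:R : R) <= n%:R * log2 (#|{: bool}|%:R : R).
Proof.
move=> [m10 [m20 _]] H.
rewrite card_bool log2_2 mul1r mulr1.
have -> : log2 (m1%:R : R) + log2 (m2%:R : R) = log2 ((m1 * m2)%:R).
  by rewrite /log2 natrM lnM ?posrE ?ltr0n // mulrDl.
by apply: log2_le => //; rewrite muln_gt0 m10.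
Qed.

Lemma FL_unit (G2 : rel 'I_3) n m1 m2 :
  feasible_vec G1_star G2 n m1 m2 -> (m2 <= 1)%N ->
  log2 (#|{: unit}|%:R : R) * log2 (m1%:R : R) + log2 (m2%:R : R) <= n%:R * log2 (#|{: unit}|%:R : R).
Proof.
move=> [m10 [m20 _]] H.
have -> : m2 = 1%N by apply/eqP; rewrite eqn_leq H m20.
by rewrite card_unit /log2 ln1 !mul0r mulr0 add0r.
Qed.

Lemma FL_I3 (G2 : rel 'I_3) n m1 m2 :
  feasible_vec G1_star G2 n m1 m2 ->
  log2 (#|{: 'I_3}|%:R : R) * log2 (m1%:R : R) + log2 (m2%:R : R) <= n%:R * log2 (#|{: 'I_3}|%:R : R).
Proof.
move=> [m10 [m20 [E HE]]].
rewrite card_ord.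
set c := log2 (3%:R : R).
have c1 : 1 <= c by exact: c_ge1.
have c0 : 0 < c by apply: lt_le_trans c1.
have HE1 : forall x y, x.1 != y.1 -> distinguishable G1_star (E x) (E y).
  by move=> x y; case: (HE x y).
have HE2 : forall x y, x.2 != y.2 -> distinguishable G2 (E x) (E y).
  by move=> x y; case: (HE x y).
have row : forall a, (m2%:R : R) <= (#|Ua E a|%:R) `^ c.
  move=> a; apply: le_trans (H2 R (Ua E a)).
  rewrite ler_nat.
  have Hc : #|[set E (a, b) | b : 'I_m2]| = m2.
    by rewrite card_imset ?card_ord //; exact: feas_row HE2.
  apply: (@leq_trans #|[set E (a, b) | b : 'I_m2]|); first by rewrite Hc.
  apply: subset_leq_card; apply/fintype.subsetP => w /imsetP [b _ ->].
  rewrite inE; apply/forallP => p; apply/implyP => Hcb.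
  by rewrite inE; apply/existsP; exists b.
have rowr : forall a, (m2%:R : R) `^ c^-1 <= #|Ua E a|%:R.
  move=> a.
  have ci : 0 <= c^-1 by rewrite invr_ge0 ltW.
  have := @ge0_ler_powR R c^-1 ci _ _ _ _ (row a).
  rewrite -powRrM mulfV ?gt_eqF // powRr1 ?ler0n //.
  by apply; rewrite nnegrE ?ler0n ?powR_ge0.
have S : \sum_(a < m1) (m2%:R : R) `^ c^-1 <= ((2 ^ n)%N)%:R.
  apply: le_trans (_ : \sum_(a < m1) (#|Ua E a|%:R : R) <= _).
    by apply: ler_sum => a _; exact: rowr.
  by rewrite -natr_sum ler_nat; exact: Ua_disj HE1.
rewrite sumr_const card_ord -(mulr_natl ((m2%:R : R) `^ c^-1) m1) in S.
have xp : 0 < (m2%:R : R) `^ c^-1 by rewrite powR_gt0 // ltr0n.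
have := S; rewrite -ler_ln ?posrE ?mulr_gt0 ?ltr0n ?expn_gt0 //.
rewrite lnM ?posrE ?ltr0n // ln_powR natrX lnXn ?ltr0n // => h.
have h2 := ler_wpM2l (ltW c0) h.
rewrite mulrDr mulrA mulfV ?gt_eqF // mul1r in h2.
rewrite [log2 (m1%:R)]/log2 [log2 (m2%:R)]/log2.
rewrite mulrA -mulrDl ler_pdivrMr ?ln2_gt0' //.
apply: le_trans h2 _.
by rewrite -(mulr_natl (ln (2 : R)) n) mulrA (mulrC c).
Qed.
End Final.

Lemma assemble_abs (R : realType) (G2 : rel 'I_3) (K : finType) (io : K -> 'I_3)
  (Hio : forall i j, i != j -> (io i != io j) && ~~ G2 (io i) (io j))
  (k0 : (0 < #|K|)%N)
  (FL : forall n m1 m2, feasible_vec G1_star G2 n m1 m2 ->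
     log2 (#|K|%:R : R) * log2 (m1%:R : R) + log2 (m2%:R : R) <= n%:R * log2 (#|K|%:R : R))
  (C1 C2 : R) : log2 C1 = 1 -> C2 = #|K|%:R ->
  [/\ log2 C1 = 1,
      (forall a : R, 0 <= a <= 1 ->
         feasible_rate G1_star G2 (a * log2 C1) ((1 - a) * log2 C2))
    & (forall R1 R2 : R, feasible_rate G1_star G2 R1 R2 ->
         exists2 a : R, 0 <= a <= 1 & R1 <= a /\ R2 <= (1 - a) * log2 C2)].
Proof.
move=> L1 ->; split => //.
- move=> a /andP [a0 a1]; rewrite L1 mulr1; exact: (@timeshare R G2 K io Hio k0 a a0 a1).
- apply: converse_gen => //; exact: log2_ge0.
Qed.

Lemma assemble (R : realType) (G2 : rel 'I_3) (K : finType) (kap : 'I_3 -> K) (io : K -> 'I_3)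
  (Hkap : forall x y, kap x = kap y -> x = y \/ G2 x y)
  (Hio : forall i j, i != j -> (io i != io j) && ~~ G2 (io i) (io j))
  (FL : forall n m1 m2, feasible_vec G1_star G2 n m1 m2 ->
     log2 (#|K|%:R : R) * log2 (m1%:R : R) + log2 (m2%:R : R) <= n%:R * log2 (#|K|%:R : R)) :
  [/\ log2 (shannon_capacity R G1_star) = 1,
      (forall a : R, 0 <= a <= 1 ->
         feasible_rate G1_star G2
           (a * log2 (shannon_capacity R G1_star))
           ((1 - a) * log2 (shannon_capacity R G2)))
    & (forall R1 R2 : R, feasible_rate G1_star G2 R1 R2 ->
         exists2 a : R, 0 <= a <= 1 &
           R1 <= a /\ R2 <= (1 - a) * log2 (shannon_capacity R G2))].
Proof.
have k0 : (0 < #|K|)%N by apply/card_gt0P; exists (kap l0).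
have cap2 : shannon_capacity R G2 = #|K|%:R.
  by apply: cap_eq => // n; exact: alpha_pow_eq Hkap Hio n.
have cap1 : shannon_capacity R G1_star = 2%:R.
  apply: cap_eq => // n; have -> : (2 ^ n)%N = (#|{: bool}| ^ n)%N by rewrite card_bool.
  apply: (@alpha_pow_eq _ _ _ (fun x => x == l2) io1); last exact: io1_sep.
  by move=> x y; case: (ord3P x) => ->; case: (ord3P y) => -> //=; by [left|right].
have L1 : log2 (shannon_capacity R G1_star) = 1 by rewrite cap1 log2_2.
exact: assemble_abs Hio k0 FL _ _ L1 cap2.
Qed.

Theorem proposition15 (R : realType) (G2 : rel 'I_3) :
  simple_graph G2 ->
  [/\ log2 (shannon_capacity R G1_star) = 1,
      (forall a : R, 0 <= a <= 1 ->
         feasible_rate G1_star G2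
           (a * log2 (shannon_capacity R G1_star))
           ((1 - a) * log2 (shannon_capacity R G2)))
    & (forall R1 R2 : R, feasible_rate G1_star G2 R1 R2 ->
         exists2 a : R, 0 <= a <= 1 &
           R1 <= a /\ R2 <= (1 - a) * log2 (shannon_capacity R G2))].
Proof.
move=> [Gsym Girr].
have G10 := Gsym l1 l0; have G20 := Gsym l2 l0; have G21 := Gsym l2 l1.
have Gxx : forall x, G2 x x = false by [].
case e01 : (G2 l0 l1); case e02 : (G2 l0 l2); case e12 : (G2 l1 l2).
-
  apply: (@assemble R G2 _ (fun _ => tt) (fun _ => l0)).
  + move=> x y _; case: (ord3P x) => ->; case: (ord3P y) => ->;
      rewrite ?Gxx ?G10 ?G20 ?G21 ?e01 ?e02 ?e12; by [left|right].
  + by move=> [] [].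
  + move=> n m1 m2 Hf; apply: (@FL_unit R _ _ _ _ Hf); apply: (m2_le1 _ Hf).
    move=> x y; case: (ord3P x) => ->; case: (ord3P y) => ->;
      rewrite ?Gxx ?G10 ?G20 ?G21 ?e01 ?e02 ?e12 //.
-
  apply: (@assemble R G2 _ (fun x => x == l2) (fun b => if b then l2 else l1)).
  + move=> x y; case: (ord3P x) => ->; case: (ord3P y) => -> //=;
      rewrite ?Gxx ?G10 ?G20 ?G21 ?e01 ?e02 ?e12; by [left|right].
  + by move=> [] [] //=; rewrite ?G21 ?e12.
  + move=> n m1 m2 Hf; apply: (@FL_bool R _ _ _ _ Hf); apply: (FL_pattern (q := l2) _ _ Hf); first by right.
    move=> x y; case: (ord3P x) => ->; case: (ord3P y) => ->;
      rewrite ?Gxx ?G10 ?G20 ?G21 ?e01 ?e02 ?e12 //.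
-
  apply: (@assemble R G2 _ (fun x => x == l2) (fun b => if b then l2 else l0)).
  + move=> x y; case: (ord3P x) => ->; case: (ord3P y) => -> //=;
      rewrite ?Gxx ?G10 ?G20 ?G21 ?e01 ?e02 ?e12; by [left|right].
  + by move=> [] [] //=; rewrite ?G20 ?e02.
  + move=> n m1 m2 Hf; apply: (@FL_bool R _ _ _ _ Hf); apply: (FL_pattern (q := l2) _ _ Hf); first by right.
    move=> x y; case: (ord3P x) => ->; case: (ord3P y) => ->;
      rewrite ?Gxx ?G10 ?G20 ?G21 ?e01 ?e02 ?e12 //.
-
  apply: (@assemble R G2 _ (fun x => x == l2) (fun b => if b then l2 else l0)).
  + move=> x y; case: (ord3P x) => ->; case: (ord3P y) => -> //=;
      rewrite ?Gxx ?G10 ?G20 ?G21 ?e01 ?e02 ?e12; by [left|right].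
  + by move=> [] [] //=; rewrite ?G20 ?e02.
  + move=> n m1 m2 Hf; apply: (@FL_bool R _ _ _ _ Hf); apply: (FL_pattern (q := l2) _ _ Hf); first by right.
    move=> x y; case: (ord3P x) => ->; case: (ord3P y) => ->;
      rewrite ?Gxx ?G10 ?G20 ?G21 ?e01 ?e02 ?e12 //.
-
  apply: (@assemble R G2 _ (fun x => x == l1) (fun b => if b then l1 else l0)).
  + move=> x y; case: (ord3P x) => ->; case: (ord3P y) => -> //=;
      rewrite ?Gxx ?G10 ?G20 ?G21 ?e01 ?e02 ?e12; by [left|right].
  + by move=> [] [] //=; rewrite ?G10 ?e01.
  + move=> n m1 m2 Hf; apply: (@FL_bool R _ _ _ _ Hf); apply: (FL_pattern (q := l1) _ _ Hf); first by left.
    move=> x y; case: (ord3P x) => ->; case: (ord3P y) => ->;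
      rewrite ?Gxx ?G10 ?G20 ?G21 ?e01 ?e02 ?e12 //.
-
  apply: (@assemble R G2 _ (fun x => x == l1) (fun b => if b then l1 else l0)).
  + move=> x y; case: (ord3P x) => ->; case: (ord3P y) => -> //=;
      rewrite ?Gxx ?G10 ?G20 ?G21 ?e01 ?e02 ?e12; by [left|right].
  + by move=> [] [] //=; rewrite ?G10 ?e01.
  + move=> n m1 m2 Hf; apply: (@FL_bool R _ _ _ _ Hf); apply: (FL_pattern (q := l1) _ _ Hf); first by left.
    move=> x y; case: (ord3P x) => ->; case: (ord3P y) => ->;
      rewrite ?Gxx ?G10 ?G20 ?G21 ?e01 ?e02 ?e12 //.
-
  apply: (@assemble R G2 _ (fun x => x == l0) (fun b => if b then l1 else l0)).
  + move=> x y; case: (ord3P x) => ->; case: (ord3P y) => -> //=;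
      rewrite ?Gxx ?G10 ?G20 ?G21 ?e01 ?e02 ?e12; by [left|right].
  + by move=> [] [] //=; rewrite ?G10 ?e01.
  + move=> n m1 m2 Hf; apply: (@FL_bool R _ _ _ _ Hf); apply: (FL_H1 _ Hf).
    move=> x y; case: (ord3P x) => ->; case: (ord3P y) => ->;
      rewrite ?Gxx ?G10 ?G20 ?G21 ?e01 ?e02 ?e12 //.
-
  apply: (@assemble R G2 _ id id).
  + by move=> x y ->; left.
  + move=> x y; case: (ord3P x) => ->; case: (ord3P y) => ->;
      rewrite ?Gxx ?G10 ?G20 ?G21 ?e01 ?e02 ?e12 //.
  + move=> n m1 m2 Hf; exact: (@FL_I3 R _ _ _ _ Hf).
Qed.
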